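(* Let $T$ be a forest and $F$ a graph (both without roots), and let $\phi:V(T)\to V(F)$ be a local isomorphism. Then there exists a set $V\subseteq V(T)$ such that $\phi$ restricted to $V$ is a bijection onto $V(F)$ and the map $\phi^*$ restricted to $E_V(T)$ is injective.
   Context: A map $\phi:V(T)\to V(F)$ is a local isomorphism if it is surjective, maps every edge of $T$ to an edge of $F$ (i.e. $uv\in E(T)$ implies $\phi(u)\phi(v)\in E(F)$), and maps any two distinct edges of $T$ sharing a vertex to distinct edges of $F$. The induced map $\phi^*:E(T)\to E(F)$ sends $uv$ to $\phi(u)\phi(v)$. For $S\subseteq V(T)$, $E_S(T)$ is the set of edges of $T$ containing at least one vertex of $S$. *)

(* Defs.v *)
From mathcomp Require Import all_boot.
Set Implicit Arguments. Unset Strict Implicit. Unset Printing Implicit Defensive.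

Definition simple_graph (V : finType) (e : rel V) : Prop :=
  symmetric e /\ irreflexive e.

Definition forest (V : finType) (e : rel V) : Prop :=
  simple_graph e /\
  forall s : seq V, 3 <= size s -> uniq s -> ~~ cycle e s.

Definition edges (V : finType) (e : rel V) : {set {set V}} :=
  [set [set x.1; x.2] | x in [set x : V * V | e x.1 x.2]].

Definition edges_at (V : finType) (e : rel V) (S : {set V}) : {set {set V}} :=
  [set ed in edges e | ed :&: S != set0].

Definition edge_map (V W : finType) (phi : V -> W) (ed : {set V}) : {set W} :=
  phi @: ed.

Definition local_iso (V W : finType) (eT : rel V) (eF : rel W)
  (phi : V -> W) : Prop :=
  [/\ forall y : W, exists x : V, phi x = y,
      forall u v, eT u v -> eF (phi u) (phi v) &
      forall u v w, eT u v -> eT u w -> v != w ->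
        edge_map phi [set u; v] != edge_map phi [set u; w]].

(* Main.v *)
Require Import Defs.
From mathcomp Require Import all_boot.
From mathcomp Require Import zify.

Set Implicit Arguments. Unset Strict Implicit. Unset Printing Implicit Defensive.

Section Aux.
Variables (VT VF : finType) (eT : rel VT) (phi : VT -> VF).
Hypothesis symT : symmetric eT.
Hypothesis irrT : irreflexive eT.
Hypothesis acyc : forall s : seq VT, 3 <= size s -> uniq s -> ~~ cycle eT s.
Hypothesis hne : forall u v, eT u v -> phi u != phi v.
Hypothesis hli : forall u v w, eT u v -> eT u w -> phi v = phi w -> v = w.

Lemma noseq (S : {set VT}) :
  (forall x q, x \in S -> exists2 w, w \in S & eT x w && (w != q)) ->
  forall n (s : seq VT) x y, #|VT| - size s <= n ->
  uniq (x :: y :: s) -> path eT x (y :: s) -> x \in S -> False.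
Proof.
move=> hS; elim=> [|n IH] s x y hn hu hp hx.
  have := max_card (mem (x :: y :: s)).
  move/card_uniqP: (hu) => ->; rewrite /= => h.
  have h' : (size s).+2 <= #|VT| := h.
  lia.
have [w wS /andP [exw wy]] := hS x y hx.
case: (boolP (w \in x :: y :: s)) => wins; last first.
  apply: (IH (y :: s) w x) => //.
  - move: hn; rewrite /=; move: #|VT| => k; lia.
  - by rewrite cons_uniq wins hu.
  - rewrite [path _ _ _]/= symT exw /=; move: hp => /= ->. done.
rewrite inE in wins.
have wx : w != x by apply/eqP => E; move: exw; rewrite E irrT.
rewrite (negPf wx) /= in wins.
move: hp hu wins; move Ep: (y :: s) => p hp hu wins.
have hyp : p = y :: s by [].
case/splitPr: wins hyp hp hu => p1 p2 hyp hp hu.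
case: p1 hyp hp hu => [|z p1] hyp hp hu.
  by case: hyp => E; move: wy; rewrite E eqxx.
have c3 : 3 <= size (x :: rcons (z :: p1) w) by rewrite /= size_rcons.
have cu : uniq (x :: rcons (z :: p1) w).
  move: hu; rewrite -cat_rcons -cat_cons cat_uniq; by case/and3P.
move/negP: (acyc c3 cu); apply.
rewrite /cycle rcons_path rcons_path last_rcons.
move: hp; rewrite cat_path => /andP [-> /= /andP [-> _]] /=.
by rewrite symT.
Qed.

Lemma low_deg (S : {set VT}) : S != set0 ->
  exists2 x, x \in S & exists p, forall w, w \in S -> eT x w -> w = p.
Proof.
move=> Sne.
case: (boolP [exists x in S, exists p, [forall w in S, eT x w ==> (w == p)]]).
  case/existsP => x /andP [xS /existsP [p /forallP hp]].
  exists x => //; exists p => w wS exw.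
  by move: (hp w); rewrite wS exw /= => /eqP.
move=> hno; exfalso.
have hS : forall x q, x \in S -> exists2 w, w \in S & eT x w && (w != q).
  move=> x q xS.
  have : ~~ [forall w in S, eT x w ==> (w == q)].
    apply/negP => hf; move/negP: hno; apply; apply/existsP; exists x.
    by rewrite xS; apply/existsP; exists q.
  rewrite negb_forall => /existsP [w]; rewrite negb_imply => /andP [wS].
  by rewrite negb_imply => h; exists w.
case/set0Pn: Sne => x0 x0S.
have [y yS /andP [exy _]] := hS x0 x0 x0S.
apply: (noseq hS (n := #|VT|) (s := [::]) (x := y) (y := x0)) => //=.
- lia.
- rewrite inE andbT; apply/eqP => E; move: exy; by rewrite E irrT.
- by rewrite symT exy.
Qed.

Definition crossfree (S V : {set VT}) :=
  forall u1 v1 u2 v2, u1 \in V -> u2 \in V -> v1 \in S -> v2 \in S ->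
  eT u1 v1 -> eT u2 v2 -> phi u1 = phi v2 -> phi v1 = phi u2 ->
  (v1 \in V) || (v2 \in V).

Definition goodV (S V : {set VT}) :=
  [/\ V \subset S, {in V &, injective phi}, phi @: V = phi @: S & crossfree S V].

Lemma main_ind n : forall S : {set VT}, #|S| <= n -> exists V, goodV S V.
Proof.
elim: n => [|n IH] S hS.
  have S0 : S = set0 by apply/eqP; rewrite -cards_eq0; lia.
  exists set0; split.
  - by rewrite sub0set.
  - by move=> u v; rewrite inE.
  - by rewrite S0.
  - by move=> u1 v1 u2 v2; rewrite inE.
case: (eqVneq S set0) => [S0|Sne].
  exists set0; split.
  - by rewrite sub0set.
  - by move=> u v; rewrite inE.
  - by rewrite S0.
  - by move=> u1 v1 u2 v2; rewrite inE.
case: (boolP [exists x in S, phi x \notin phi @: (S :\ x)]).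
  case/existsP => x /andP [xS hx].
  have [|V' [sub inj img cf]] := IH (S :\ x).
    by move: hS; rewrite (cardsD1 x S) xS; lia.
  have xV' : x \notin V'.
    apply/negP => xv; move/subsetP: sub => /(_ x xv); by rewrite !inE eqxx.
  exists (x |: V'); split.
  - apply/subsetP => z; rewrite !inE => /orP [/eqP ->//|zv].
    by move/subsetP: sub => /(_ z zv); rewrite inE => /andP [].
  - move=> u v; rewrite !inE => /orP [/eqP ->|uv] /orP [/eqP ->|vv] //.
    + move=> E; move: hx; by rewrite -img E imset_f.
    + move=> E; move: hx; by rewrite -img -E imset_f.
    + by apply: inj.
  - by rewrite imsetU1 img -imsetU1 setD1K.
  - move=> u1 v1 u2 v2; rewrite !inE => hu1 hu2 hv1 hv2 e1 e2 p1 p2.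
    case: (eqVneq v1 x) => [E|v1x]; first by rewrite ?E ?eqxx ?orbT.
    case: (eqVneq v2 x) => [E|v2x]; first by rewrite ?E ?eqxx ?orbT.
    case: (eqVneq u1 x) hu1 => [E|u1x] /= hu1.
      by subst u1; move: hx; rewrite p1 imset_f // !inE v2x.
    case: (eqVneq u2 x) hu2 => [E|u2x] /= hu2.
      by subst u2; move: hx; rewrite -p2 imset_f // !inE v1x.
    have := cf u1 v1 u2 v2 hu1 hu2; rewrite !inE v1x v2x /=.
    by move=> /(_ hv1 hv2 e1 e2 p1 p2) /orP [->|->]; rewrite ?orbT.
rewrite negb_exists => /forallP hall.
have [x xS [p hp]] := low_deg Sne.
have hx : phi x \in phi @: (S :\ x) by move: (hall x); rewrite xS /= negbK.
have [|V' [sub inj img cf]] := IH (S :\ x).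
  by move: hS; rewrite (cardsD1 x S) xS; lia.
have xV' : x \notin V'.
  apply/negP => xv; move/subsetP: sub => /(_ x xv); by rewrite !inE eqxx.
have subS : forall z, z \in V' -> z \in S.
  by move=> z zv; move/subsetP: sub => /(_ z zv); rewrite inE => /andP [].
case: (boolP (p \in V')) => pV.
  move: (hx); rewrite -img => /imsetP [u uV pxu].
  exists (x |: V' :\ u); split.
  - apply/subsetP => z; rewrite !inE => /orP [/eqP ->//|/andP [_ zv]].
    exact: subS.
  - move=> a b; rewrite !inE => /orP [/eqP ->|/andP [au av]] /orP [/eqP ->|/andP [bu bv]] //.
    + by move=> E; move: bu; rewrite (inj u b uV bv) ?eqxx // -pxu.
    + by move=> E; move: au; rewrite (inj u a uV av) ?eqxx // -pxu.
    + by apply: inj.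
  - rewrite imsetU1 pxu -imsetU1 setD1K // img.
    rewrite -{2}(setD1K xS) imsetU1.
    apply/setP => z; rewrite !inE; case: eqP => // ->; by rewrite hx.
  - move=> u1 v1 u2 v2; rewrite !inE => hu1 hu2 hv1 hv2 e1 e2 p1 p2.
    case: (eqVneq v1 x) => [E|v1x]; first by rewrite ?E ?eqxx ?orbT.
    case: (eqVneq v2 x) => [E|v2x]; first by rewrite ?E ?eqxx ?orbT.
    case: (eqVneq u1 x) hu1 => [E1|u1x] /= hu1.
      have Ev1 : v1 = p by apply: hp; rewrite // -E1.
      have pu : p != u.
        apply/eqP => E; move: (hne e1); by rewrite Ev1 E -pxu E1 eqxx.
      by rewrite Ev1 pu pV.
    case: (eqVneq u2 x) hu2 => [E2|u2x] /= hu2.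
      have Ev2 : v2 = p by apply: hp; rewrite // -E2.
      have pu : p != u.
        apply/eqP => E; move: (hne e2); by rewrite Ev2 E -pxu E2 eqxx.
      by rewrite Ev2 pu pV orbT.
    move/andP: hu1 => [u1u u1v]; move/andP: hu2 => [u2u u2v].
    have := cf u1 v1 u2 v2 u1v u2v; rewrite !inE v1x v2x /=.
    move=> /(_ hv1 hv2 e1 e2 p1 p2) /orP [h|h].
    + case: (eqVneq v1 u) => [Ev|vu].
        by move: u2u; rewrite -(inj v1 u2 h u2v p2) Ev eqxx.
      by rewrite h.
    + case: (eqVneq v2 u) => [Ev|vu].
        by move: u1u; rewrite (inj u1 v2 u1v h p1) Ev eqxx.
      by rewrite h orbT.
exists V'; split => //.
- by apply/subsetP => z /subS.
- rewrite img -{2}(setD1K xS) imsetU1.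
  apply/setP => z; rewrite !inE; case: eqP => // ->; by rewrite hx.
- move=> u1 v1 u2 v2 hu1 hu2 hv1 hv2 e1 e2 p1 p2.
  have u1x : u1 != x by apply/eqP => E; move: xV'; rewrite -E hu1.
  have u2x : u2 != x by apply/eqP => E; move: xV'; rewrite -E hu2.
  have v1x : v1 != x.
    apply/eqP => E; move: pV; rewrite -(hp u1 (subS _ hu1)) ?hu1 //.
    by rewrite symT -E.
  have v2x : v2 != x.
    apply/eqP => E; move: pV; rewrite -(hp u2 (subS _ hu2)) ?hu2 //.
    by rewrite symT -E.
  by apply: (cf u1 v1 u2 v2) => //; rewrite !inE ?v1x ?v2x.
Qed.
End Aux.

Lemma set2_eq (T : finType) (a b c d : T) :
  [set a; b] = [set c; d] -> a != b -> (a = c /\ b = d) \/ (a = d /\ b = c).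
Proof.
move=> E ab.
have ha : a \in [set c; d] by rewrite -E !inE eqxx.
have hb : b \in [set c; d] by rewrite -E !inE eqxx orbT.
have hc : c \in [set a; b] by rewrite E !inE eqxx.
have hd : d \in [set a; b] by rewrite E !inE eqxx orbT.
move: ha hb hc hd; rewrite !inE.
case/orP=> /eqP ea; case/orP=> /eqP eb; subst.
- by rewrite eqxx in ab.
- by left.
- by right.
- by rewrite eqxx in ab.
Qed.

Lemma edge_at_inv (VT : finType) (eT : rel VT) (V : {set VT}) e :
  symmetric eT -> e \in edges_at eT V ->
  exists u v, [/\ e = [set u; v], eT u v & u \in V].
Proof.
move=> symT; rewrite inE => /andP [/imsetP [x]].
rewrite inE => ex -> /set0Pn [z]; rewrite !inE => /andP [/orP [] /eqP -> zV].
- by exists x.1, x.2.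
- by exists x.2, x.1; rewrite symT ex setUC.
Qed.

Theorem lemma5p1 (VT VF : finType) (eT : rel VT) (eF : rel VF)
  (phi : VT -> VF) :
  forest eT -> simple_graph eF -> local_iso eT eF phi ->
  exists V : {set VT},
    [/\ {in V &, injective phi}, phi @: V = [set: VF] &
        {in edges_at eT V &, injective (edge_map phi)}].
Proof.
move=> [[symT irrT] acyc] [symF irrF] [surj hom li].
have hne : forall u v, eT u v -> phi u != phi v.
  move=> u v euv; apply/eqP => E; move: (hom u v euv); by rewrite E irrF.
have hli : forall u v w, eT u v -> eT u w -> phi v = phi w -> v = w.
  move=> u v w euv euw E; case: (eqVneq v w) => // vw.
  move: (li u v w euv euw vw); by rewrite /edge_map !imsetU1 !imset_set1 E eqxx.
have [V [_ inj img cf]] := main_ind symT irrT acyc hne (leqnn #|[set: VT]|).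
exists V; split => //.
- rewrite img; apply/setP => y; rewrite inE.
  by have [x <-] := surj y; apply: imset_f; rewrite inE.
- move=> e1 e2 h1 h2.
  have [u1 [v1 [-> e1e u1V]]] := edge_at_inv symT h1.
  have [u2 [v2 [-> e2e u2V]]] := edge_at_inv symT h2.
  rewrite /edge_map !imsetU1 !imset_set1 => E.
  case: (set2_eq E (hne _ _ e1e)) => [[pa pb]|[pa pb]].
    have uu := inj _ _ u1V u2V pa; subst u2.
    by rewrite (hli _ _ _ e1e e2e pb).
  have := cf u1 v1 u2 v2 u1V u2V; rewrite !inE => /(_ isT isT e1e e2e pa pb).
  case/orP => hv.
    have vu := inj _ _ hv u2V pb; subst v1.
    have := hli u2 v2 u1 e2e; rewrite symT => /(_ e1e (esym pa)) ->.
    by rewrite setUC.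
  have vu := inj _ _ u1V hv pa; subst v2.
  have := hli u1 v1 u2 e1e; rewrite symT => /(_ e2e pb) ->.
  by rewrite setUC.
Qed.
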